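(* (i) Let $h:\omega\to\omega$ be nondecreasing and let $g(n)=h(2n)$. Then $\mathrm{IOE}(h)\equiv_W\mathrm{IOE}(g)$ and $\mathrm{AED}(h)\equiv_S\mathrm{AED}(g)$. (ii) For all real numbers $a,b>1$, $\mathrm{IOE}(n\mapsto 2^{(a^n)})\equiv_W\mathrm{IOE}(n\mapsto 2^{(b^n)})$ and $\mathrm{AED}(n\mapsto2^{(a^n)})\equiv_S\mathrm{AED}(n\mapsto2^{(b^n)})$.
   Context: A mass problem is a nonempty set of functions $\omega\to\omega$. For mass problems $\mathcal B,\mathcal C$: $\mathcal B\le_S\mathcal C$ if there is a Turing functional $\Phi$ with $\Phi^g\in\mathcal B$ for all $g\in\mathcal C$; $\mathcal B\le_W\mathcal C$ if every $g\in\mathcal C$ Turing computes some $f\in\mathcal B$; $\equiv_S,\equiv_W$ are the induced equivalences. For a function $h$ (with values in $\omega$ or positive reals), $\mathrm{IOE}(h)$ is the set of functions $y:\omega\to\omega$ such that for every computable function $x$ with $x(n)<h(n)$ for all $n$, there are infinitely many $n$ with $x(n)=y(n)$; $\mathrm{AED}(h)$ is the set of functions $y:\omega\to\omega$ with $y(n)<h(n)$ for all $n$ such that for every computable function $x$, $x(n)\ne y(n)$ for all but finitely many $n$. *)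

(* Defs.v *)
From Stdlib Require Import Reals List Arith.
Import ListNotations.
Open Scope R_scope.

Inductive code : Type :=
| CZero
| CSucc
| CProj (i : nat)
| COracle
| CComp (f : code) (gs : list code)
| CPrim (f s : code)             (* primitive recursion on first argument *)
| CMu (f : code).                (* unbounded minimisation on first argument *)

Inductive eval (g : nat -> nat) : code -> list nat -> nat -> Prop :=
| ev_zero xs : eval g CZero xs 0
| ev_succ xs : eval g CSucc xs (S (hd 0%nat xs))
| ev_proj i xs : eval g (CProj i) xs (nth i xs 0%nat)
| ev_oracle xs : eval g COracle xs (g (hd 0%nat xs))
| ev_comp f gs xs ys z :
    Forall2 (fun c y => eval g c xs y) gs ys ->
    eval g f ys z -> eval g (CComp f gs) xs z
| ev_prim0 f s xs z : eval g f xs z -> eval g (CPrim f s) (0%nat :: xs) z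
| ev_primS f s n xs r z :
    eval g (CPrim f s) (n :: xs) r ->
    eval g s (n :: r :: xs) z -> eval g (CPrim f s) (S n :: xs) z
| ev_mu f xs n :
    eval g f (n :: xs) 0%nat ->
    (forall m, (m < n)%nat -> exists k, eval g f (m :: xs) (S k)) ->
    eval g (CMu f) xs n.

Definition Tcomputes (g f : nat -> nat) : Prop :=
  exists c : code, forall n, eval g c [n] (f n).

Definition computable (f : nat -> nat) : Prop := Tcomputes (fun _ => 0%nat) f.

Definition mass := (nat -> nat) -> Prop.

Definition S_le (B C : mass) : Prop :=
  exists c : code, forall g, C g -> exists f, B f /\ forall n, eval g c [n] (f n).

Definition W_le (B C : mass) : Prop :=
  forall g, C g -> exists f, B f /\ Tcomputes g f.

Definition S_equiv (B C : mass) : Prop := S_le B C /\ S_le C B.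
Definition W_equiv (B C : mass) : Prop := W_le B C /\ W_le C B.

(* IOE(h), h with positive real values (nat-valued h via INR) *)
Definition IOE (h : nat -> R) : mass := fun y =>
  forall x, computable x -> (forall n, INR (x n) < h n) ->
    forall N, exists n, (N <= n)%nat /\ x n = y n.

Definition AED (h : nat -> R) : mass := fun y =>
  (forall n, INR (y n) < h n) /\
  forall x, computable x -> exists N, forall n, (N <= n)%nat -> x n <> y n.

(* Main.v *)
Require Import Defs.
From Stdlib Require Import Reals Arith Lia List Classical Lra.
Import ListNotations.
Open Scope R_scope.

Lemma ev_comp1 g f c xs y z : eval g c xs y -> eval g f [y] z -> eval g (CComp f [c]) xs z.
Proof. intros; econstructor; [constructor; [eauto|constructor] | eauto]. Qed.
Lemma ev_comp2 g f c1 c2 xs y1 y2 z : eval g c1 xs y1 -> eval g c2 xs y2 ->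
  eval g f [y1; y2] z -> eval g (CComp f [c1; c2]) xs z.
Proof. intros; econstructor; [repeat constructor; eauto | eauto]. Qed.
Lemma ev_comp3 g f c1 c2 c3 xs y1 y2 y3 z : eval g c1 xs y1 -> eval g c2 xs y2 -> eval g c3 xs y3 ->
  eval g f [y1; y2; y3] z -> eval g (CComp f [c1; c2; c3]) xs z.
Proof. intros; econstructor; [repeat constructor; eauto | eauto]. Qed.

Definition dblc := CPrim CZero (CComp CSucc [CComp CSucc [CProj 1]]).
Lemma ev_dbl g n : eval g dblc [n] (2*n)%nat.
Proof.
  induction n. - constructor. constructor.
  - replace (2 * S n)%nat with (S (S (2*n)))%nat by lia.
    eapply ev_primS; [exact IHn|]. eapply ev_comp1; [eapply ev_comp1; constructor|]. constructor.
Qed.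

Definition negc := CPrim (CComp CSucc [CZero]) CZero.
Lemma ev_neg g n : eval g negc [n] (match n with O => 1 | S _ => 0 end)%nat.
Proof.
  induction n. - constructor. eapply ev_comp1; constructor.
  - eapply ev_primS; [exact IHn|constructor].
Qed.

Fixpoint par (n : nat) : nat := match n with O => O | S n => match par n with O => 1 | S _ => 0 end end.
Fixpoint hlf (n : nat) : nat := match n with O => O | S n => hlf n + par n end.

Definition parc := CPrim CZero (CComp negc [CProj 1]).
Lemma ev_par g n : eval g parc [n] (par n).
Proof.
  induction n. - constructor. constructor.
  - eapply ev_primS; [exact IHn|]. eapply ev_comp1; [constructor|]. apply ev_neg.
Qed.

Definition addc := CPrim (CProj 0) (CComp CSucc [CProj 1]).
Lemma ev_add g a b : eval g addc [a; b] (a + b)%nat.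
Proof.
  induction a. - constructor. constructor.
  - eapply ev_primS; [exact IHa|]. eapply ev_comp1; constructor.
Qed.

Definition hlfc := CPrim CZero (CComp addc [CProj 1; CComp parc [CProj 0]]).
Lemma ev_hlf g n : eval g hlfc [n] (hlf n).
Proof.
  induction n. - constructor. constructor.
  - eapply ev_primS; [exact IHn|]. eapply ev_comp2; [constructor| |apply ev_add].
    eapply ev_comp1; [constructor|]. apply ev_par.
Qed.

Definition condc := CPrim (CProj 0) (CProj 3).
Lemma ev_cond g p a b : eval g condc [p; a; b] (match p with O => a | S _ => b end).
Proof.
  induction p. - constructor. constructor.
  - eapply ev_primS; [exact IHp|constructor].
Qed.

Lemma par_hlf n : n = (2 * hlf n + par n)%nat /\ (par n = 0 \/ par n = 1)%nat.
Proof.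
  induction n; simpl. lia. destruct IHn as [H1 [H2|H2]]; rewrite H2; simpl; lia.
Qed.

Lemma par_even k : par (2*k) = 0%nat /\ hlf (2*k) = k.
Proof.
  induction k. simpl; auto.
  replace (2 * S k)%nat with (S (S (2*k)))%nat by lia. destruct IHk as [A B].
  change (par (S (S (2*k)))) with (match (match par (2*k) with O => 1 | S _ => 0 end) with O => 1 | S _ => 0 end)%nat.
  change (hlf (S (S (2*k)))) with (hlf (2*k) + par (2*k) + (match par (2*k) with O => 1 | S _ => 0 end))%nat.
  rewrite A, B. split; lia.
Qed.
Lemma par_odd k : par (S (2*k)) = 1%nat /\ hlf (S (2*k)) = k.
Proof. destruct (par_even k) as [A B]. change (par (S (2*k))) with (match par (2*k) with O => 1 | S _ => 0 end)%nat.
  change (hlf (S (2*k))) with (hlf (2*k) + par (2*k))%nat. rewrite A, B. split; lia. Qed.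
Section S.
Definition mono (h : nat -> R) := forall m n, (m <= n)%nat -> h m <= h n.

Lemma L2 (h : nat -> R) y : mono h -> IOE h y ->
  IOE (fun n => h (2*n)%nat) (fun k => y (2*k)%nat) \/ IOE (fun n => h (2*n)%nat) (fun k => y (S (2*k))).
Proof.
  intros Hm Hy.
  destruct (classic (IOE (fun n => h (2*n)%nat) (fun k => y (S (2*k))))) as [H|H]; [right; exact H| left].
  intros x1 [c1 Hc1] b1 N1. apply NNPP; intro Hn1. apply H.
  intros x2 [c2 Hc2] b2 N2. apply NNPP; intro Hn2. exfalso.
  set (x := fun m => match par m with O => x1 (hlf m) | S _ => x2 (hlf m) end).
  assert (Cx : computable x).
  { exists (CComp condc [parc; CComp c1 [hlfc]; CComp c2 [hlfc]]). intro m.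
    eapply ev_comp3; [apply ev_par | eapply ev_comp1; [apply ev_hlf| apply Hc1]
      | eapply ev_comp1; [apply ev_hlf| apply Hc2] | apply ev_cond]. }
  assert (Bx : forall n, INR (x n) < h n).
  { intro m. destruct (par_hlf m) as [E [P|P]]; unfold x; rewrite P.
    - eapply Rlt_le_trans; [apply b1|]. apply Hm. lia.
    - eapply Rlt_le_trans; [apply b2|]. apply Hm. lia. }
  destruct (Hy x Cx Bx (2*(N1+N2))%nat) as [m [Hm1 Hm2]].
  destruct (par_hlf m) as [E [P|P]]; unfold x in Hm2; rewrite P in Hm2.
  - apply Hn1. exists (hlf m). split. lia. rewrite Hm2. f_equal. lia.
  - apply Hn2. exists (hlf m). split. lia. rewrite Hm2. f_equal. lia.
Qed.

Lemma L3 (h : nat -> R) y : mono h -> AED (fun n => h (2*n)%nat) y -> AED h (fun m => y (hlf m)).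
Proof.
  intros Hm [Hb Ha]. split.
  - intro m. eapply Rlt_le_trans; [apply Hb|]. apply Hm. destruct (par_hlf m); lia.
  - intros x [c Hc].
    destruct (Ha (fun k => x (2*k)%nat)) as [N1 H1].
    { exists (CComp c [dblc]). intro n. eapply ev_comp1; [apply ev_dbl|apply Hc]. }
    destruct (Ha (fun k => x (S (2*k)))) as [N2 H2].
    { exists (CComp c [CComp CSucc [dblc]]). intro n.
      eapply ev_comp1; [eapply ev_comp1; [apply ev_dbl| constructor]|apply Hc]. }
    exists (2*(N1+N2))%nat. intros m Hmm.
    destruct (par_hlf m) as [E [P|P]].
    + intro Eq. apply (H1 (hlf m)). lia. rewrite <- Eq. f_equal. lia.
    + intro Eq. apply (H2 (hlf m)). lia. rewrite <- Eq. f_equal. lia.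
Qed.

Lemma IOE_le (h1 h2 : nat -> R) y : (forall n, h1 n <= h2 n) -> IOE h2 y -> IOE h1 y.
Proof. intros H Hy x cx bx. apply Hy; auto. intro n; eapply Rlt_le_trans; eauto. Qed.
Lemma AED_le (h1 h2 : nat -> R) y : (forall n, h1 n <= h2 n) -> AED h1 y -> AED h2 y.
Proof. intros H [Hb Ha]. split; auto. intro n; eapply Rlt_le_trans; eauto. Qed.

Lemma mono_pow (h : nat -> R) j : mono h -> mono (fun n => h (2^j*n)%nat).
Proof. intros H m n Hmn. apply H. apply Nat.mul_le_mono_l. exact Hmn. Qed.

Lemma iterIOE (h : nat -> R) : mono h -> forall j y, IOE h y ->
  exists q p, (forall g n, eval g q [n] (p n)) /\ IOE (fun n => h (2^j*n)%nat) (fun n => y (p n)).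
Proof.
  intros Hm j y Hy. induction j.
  - exists (CProj 0), (fun n => n). split. intros; constructor.
    eapply IOE_le; [|exact Hy]. intro n. simpl. replace (n+0)%nat with n by lia. apply Rle_refl.
  - destruct IHj as [q [p [Hq Hp]]].
    destruct (L2 _ _ (mono_pow h j Hm) Hp) as [H|H].
    + exists (CComp q [dblc]), (fun k => p (2*k)%nat). split.
      intros; eapply ev_comp1; [apply ev_dbl|apply Hq].
      eapply IOE_le; [|exact H]. intro n. cbv beta. replace (2 ^ S j * n)%nat with (2 ^ j * (2 * n))%nat by (simpl; ring). apply Rle_refl.
    + exists (CComp q [CComp CSucc [dblc]]), (fun k => p (S (2*k))). split.
      intros; eapply ev_comp1; [eapply ev_comp1; [apply ev_dbl|constructor]|apply Hq].
      eapply IOE_le; [|exact H]. intro n. cbv beta. replace (2 ^ S j * n)%nat with (2 ^ j * (2 * n))%nat by (simpl; ring). apply Rle_refl.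
Qed.

Lemma iterAED (h : nat -> R) : mono h -> forall j,
  exists q p, (forall g n, eval g q [n] (p n)) /\ forall y, AED (fun n => h (2^j*n)%nat) y -> AED h (fun n => y (p n)).
Proof.
  intros Hm j. induction j.
  - exists (CProj 0), (fun n => n). split. intros; constructor.
    intros y Hy. eapply AED_le; [|exact Hy]. intro n. simpl. replace (n+0)%nat with n by lia. apply Rle_refl.
  - destruct IHj as [q [p [Hq Hp]]].
    exists (CComp hlfc [q]), (fun n => hlf (p n)). split.
    intros; eapply ev_comp1; [apply Hq|apply ev_hlf].
    intros y Hy. apply (Hp (fun m => y (hlf m))). apply L3. apply mono_pow; auto.
    eapply AED_le; [|exact Hy]. intro n. cbv beta. replace (2 ^ S j * n)%nat with (2 ^ j * (2 * n))%nat by (simpl; ring). apply Rle_refl.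
Qed.

Lemma dirW (A B : nat -> R) : mono B -> (exists j, forall n, A n <= B (2^j*n)%nat) -> W_le (IOE A) (IOE B).
Proof.
  intros Hm [j Hj] y Hy. destruct (iterIOE B Hm j y Hy) as [q [p [Hq Hp]]].
  exists (fun n => y (p n)). split. eapply IOE_le; [exact Hj|exact Hp].
  exists (CComp COracle [q]). intro n. eapply ev_comp1; [apply Hq|constructor].
Qed.

Lemma dirS (A B : nat -> R) : mono A -> (exists j, forall n, B n <= A (2^j*n)%nat) -> S_le (AED A) (AED B).
Proof.
  intros Hm [j Hj]. destruct (iterAED A Hm j) as [q [p [Hq Hp]]].
  exists (CComp COracle [q]). intros y Hy. exists (fun n => y (p n)). split.
  apply Hp. eapply AED_le; [exact Hj|exact Hy].
  intro n. eapply ev_comp1; [apply Hq|constructor].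
Qed.

Lemma pow2_ge j : (j < 2^j)%nat.
Proof. induction j; simpl; lia. Qed.
Lemma pow2_ge2 j : (j <= 2^j)%nat. Proof. pose proof (pow2_ge j); lia. Qed.

Lemma exp_bound a b : 1 < a -> 1 < b -> exists j, forall n, Rpower 2 (b ^ n) <= Rpower 2 (a ^ (2^j*n)%nat).
Proof.
  intros Ha Hb. assert (Hra : Rabs a > 1) by (rewrite Rabs_right; lra).
  destruct (Pow_x_infinity a Hra b) as [N HN].
  exists N. intro n. apply Rle_Rpower. lra. rewrite pow_mult. apply pow_incr. split. lra.
  specialize (HN N (le_n _)). rewrite Rabs_right in HN.
  eapply Rle_trans; [apply Rge_le; exact HN|]. apply Rle_pow. lra. apply pow2_ge2.
  apply Rle_ge, pow_le. lra.
Qed.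
End S.

Theorem mainTheorem4 :
  (forall h : nat -> nat,
     (forall m n : nat, (m <= n)%nat -> (h m <= h n)%nat) ->
     W_equiv (IOE (fun n => INR (h n))) (IOE (fun n => INR (h (2 * n)%nat))) /\
     S_equiv (AED (fun n => INR (h n))) (AED (fun n => INR (h (2 * n)%nat)))) /\
  (forall a b : R, 1 < a -> 1 < b ->
     W_equiv (IOE (fun n => Rpower 2 (a ^ n))) (IOE (fun n => Rpower 2 (b ^ n))) /\
     S_equiv (AED (fun n => Rpower 2 (a ^ n))) (AED (fun n => Rpower 2 (b ^ n)))).
Proof.
  split.
  - intros h Hh.
    assert (M1 : mono (fun n => INR (h n))) by (intros m n H; apply le_INR; auto).
    assert (M2 : mono (fun n => INR (h (2*n)%nat))) by (intros m n H; apply le_INR; apply Hh; lia).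
    split; split.
    + apply dirW; auto. exists 0%nat. intro n. apply le_INR, Hh. simpl. lia.
    + apply dirW; auto. exists 1%nat. intro n. apply le_INR, Hh. simpl. lia.
    + apply dirS; auto. exists 1%nat. intro n. apply le_INR, Hh. simpl. lia.
    + apply dirS; auto. exists 0%nat. intro n. apply le_INR, Hh. simpl. lia.
  - intros a b Ha Hb.
    assert (Mono : forall c, 1 < c -> mono (fun n => Rpower 2 (c ^ n))).
    { intros c Hc m n H. apply Rle_Rpower. lra. apply Rle_pow; lra || auto. }
    split; split.
    + apply dirW; auto. apply exp_bound; auto.
    + apply dirW; auto. apply exp_bound; auto.
    + apply dirS; auto. apply exp_bound; auto.
    + apply dirS; auto. apply exp_bound; auto.
Qed.
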